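(* If a countably infinite oligomorphic structure $\mathbb{A}$ has the finite length property over a field $\mathbb{F}$, then every structure $\mathbb{B}$ that is first-order interpretable in $\mathbb{A}$ is oligomorphic and has the finite length property over $\mathbb{F}$.
   Context: Oligomorphic: the automorphism group has finitely many orbits on each finite power. An orbit-finite set over $\mathbb{A}$ is obtained from some $\mathbb{A}^d$ by restricting to an $\operatorname{Aut}(\mathbb{A})$-invariant subset and quotienting by an $\operatorname{Aut}(\mathbb{A})$-invariant equivalence relation, with the induced action. A $\sigma'$-structure $\mathbb{B}$ (relational vocabulary $\sigma'$) is first-order interpretable in $\mathbb{A}$ if it is isomorphic to a structure whose underlying set is an orbit-finite set $X$ over $\mathbb{A}$ and in which each $d$-ary $R\in\sigma'$ is interpreted by an $\operatorname{Aut}(\mathbb{A})$-invariant subset of $X^d$. Finite length property over $\mathbb{F}$ for a structure $\mathbb{M}$: for every orbit-finite set $Y$ over $\mathbb{M}$, there is a finite bound on the lengths $n$ of chains $V_0\subsetneq\dots\subsetneq V_n$ of $\operatorname{Aut}(\mathbb{M})$-invariant subspaces of $\operatorname{Lin}_{\mathbb{F}}Y$ (finite formal linear combinations of elements of $Y$). *)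

(* Defs.v *)
From HB Require Import structures.
From mathcomp Require Import all_boot all_algebra.
Set Implicit Arguments. Unset Strict Implicit. Unset Printing Implicit Defensive.
Import GRing.Theory.
Local Open Scope ring_scope.

Record structure := Structure {
  carrier :> Type;
  sym : Type;
  arity : sym -> nat;
  rel : forall s : sym, ('I_(arity s) -> carrier) -> Prop }.

Definition is_aut (M : structure) (g : M -> M) : Prop :=
  bijective g /\
  forall (s : sym M) (t : 'I_(arity s) -> M), rel t <-> rel (g \o t).

Definition countably_infinite (M : structure) : Prop :=
  exists f : nat -> M, bijective f.

Definition oligomorphic (M : structure) : Prop :=
  forall n : nat, exists (k : nat) (reps : 'I_k -> ('I_n -> M)),
    forall t : 'I_n -> M, exists (i : 'I_k) (g : M -> M),
      is_aut g /\ g \o reps i = t.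

(* Data of an orbit-finite set over M: an Aut(M)-invariant subset S of M^d
   and an Aut(M)-invariant equivalence relation E on S; the set is S/E. *)
Definition orbit_finite_data (M : structure) (d : nat)
  (S : ('I_d -> M) -> Prop) (E : ('I_d -> M) -> ('I_d -> M) -> Prop) : Prop :=
  (forall g, is_aut g -> forall t, S t <-> S (g \o t)) /\
  (forall g, is_aut g -> forall t u, E t u <-> E (g \o t) (g \o u)) /\
  (forall t u, E t u -> S t /\ S u) /\
  (forall t, S t -> E t t) /\
  (forall t u, E t u -> E u t) /\
  (forall t u w, E t u -> E u w -> E t w).

(* Elements of Lin_F (S/E): finitely supported F-valued functions on S/E,
   represented as functions on d-tuples that vanish outside S, are constant
   on E-classes, and are non-zero on only finitely many E-classes. *)
Definition in_Lin (F : fieldType) (M : structure) (d : nat)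
  (S : ('I_d -> M) -> Prop) (E : ('I_d -> M) -> ('I_d -> M) -> Prop)
  (v : ('I_d -> M) -> F) : Prop :=
  (forall t, v t != 0 -> S t) /\
  (forall t u, E t u -> v t = v u) /\
  (exists (k : nat) (reps : 'I_k -> ('I_d -> M)),
     forall t, v t != 0 -> exists i, E t (reps i)).

(* Aut(M)-invariant linear subspaces of Lin_F (S/E); g acts on a vector v
   by (g.v)([t]) = v([g^-1 t]). *)
Definition invariant_subspace (F : fieldType) (M : structure) (d : nat)
  (S : ('I_d -> M) -> Prop) (E : ('I_d -> M) -> ('I_d -> M) -> Prop)
  (V : (('I_d -> M) -> F) -> Prop) : Prop :=
  (forall v, V v -> in_Lin S E v) /\
  V (fun _ => 0) /\
  (forall v w, V v -> V w -> V (fun t => v t + w t)) /\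
  (forall (a : F) v, V v -> V (fun t => a * v t)) /\
  (forall (g h : M -> M), is_aut g -> cancel g h -> cancel h g ->
     forall v, V v -> V (fun t => v (h \o t))).

Definition invariant_chain (F : fieldType) (M : structure) (d : nat)
  (S : ('I_d -> M) -> Prop) (E : ('I_d -> M) -> ('I_d -> M) -> Prop)
  (n : nat) (V : nat -> (('I_d -> M) -> F) -> Prop) : Prop :=
  (forall i, (i <= n)%N -> invariant_subspace S E (V i)) /\
  (forall i, (i < n)%N ->
     (forall v, V i v -> V i.+1 v) /\ exists v, V i.+1 v /\ ~ V i v).

Definition finite_length (F : fieldType) (M : structure) : Prop :=
  forall (d : nat) (S : ('I_d -> M) -> Prop)
         (E : ('I_d -> M) -> ('I_d -> M) -> Prop),
    orbit_finite_data S E ->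
    exists N : nat, forall n (V : nat -> (('I_d -> M) -> F) -> Prop),
      invariant_chain S E n V -> (n <= N)%N.

(* B is first-order interpretable in A: B is isomorphic (via h) to the
   structure on the orbit-finite set X = S/E whose relations are
   Aut(A)-invariant subsets of X^k (the action of g on X being
   [t] |-> [g o t]). *)
Definition fo_interpretable (B A : structure) : Prop :=
  exists (d : nat) (S : ('I_d -> A) -> Prop)
         (E : ('I_d -> A) -> ('I_d -> A) -> Prop) (h : ('I_d -> A) -> B),
    orbit_finite_data S E /\
    (forall b : B, exists t, S t /\ h t = b) /\
    (forall t u, S t -> S u -> (h t = h u <-> E t u)) /\
    (forall (s : sym B) (ts : 'I_(arity s) -> ('I_d -> A)) (g : A -> A),
       is_aut g -> (forall i, S (ts i)) ->
       (rel (h \o ts) <-> rel (h \o (fun i => g \o ts i)))).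

(* Main.v *)
Require Import Defs.
From mathcomp Require Import all_boot all_algebra.
From Stdlib Require Import ClassicalEpsilon FunctionalExtensionality.
Set Implicit Arguments. Unset Strict Implicit. Unset Printing Implicit Defensive.

Lemma aut_inv (M : structure) (g g' : M -> M) :
  is_aut g -> cancel g g' -> cancel g' g -> is_aut g'.
Proof.
move=> [_ Hg] c1 c2; split; first by exists g.
move=> s t; rewrite (Hg s (g' \o t)).
have -> : g \o (g' \o t) = t by apply: functional_extensionality => i /=; rewrite c2.
by [].
Qed.

Section Induced.
Variables (A B : structure) (d : nat) (S : ('I_d -> A) -> Prop)
  (E : ('I_d -> A) -> ('I_d -> A) -> Prop) (h : ('I_d -> A) -> B).
Hypothesis HSE : orbit_finite_data S E.
Hypothesis Hsurj : forall b : B, exists t, S t /\ h t = b.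
Hypothesis Hinj : forall t u, S t -> S u -> (h t = h u <-> E t u).
Hypothesis Hrel : forall (s : sym B) (ts : 'I_(arity s) -> ('I_d -> A)) (g : A -> A),
       is_aut g -> (forall i, S (ts i)) ->
       (Defs.rel (h \o ts) <-> Defs.rel (h \o (fun i => g \o ts i))).

Definition pick (b : B) : 'I_d -> A :=
  proj1_sig (constructive_indefinite_description _ (Hsurj b)).
Lemma pickS b : S (pick b).
Proof. rewrite /pick; case: constructive_indefinite_description => x [] //. Qed.
Lemma pickh b : h (pick b) = b.
Proof. rewrite /pick; case: constructive_indefinite_description => x [] //. Qed.

Lemma Sinv g t : is_aut g -> S t <-> S (g \o t).
Proof. by case: HSE => H _ Hg; apply: H. Qed.

Definition ind (g : A -> A) (b : B) : B := h (g \o pick b).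

Lemma indE g x : is_aut g -> S x -> ind g (h x) = h (g \o x).
Proof.
move=> Hg Sx; rewrite /ind.
case: HSE => HS [HE _].
have Sp := pickS (h x).
have Ep : E (pick (h x)) x by apply/Hinj => //; rewrite pickh.
have S1 : S (g \o pick (h x)) by apply (proj1 (HS g Hg _)).
have S2 : S (g \o x) by apply (proj1 (HS g Hg _)).
apply/(Hinj S1 S2).
by apply (proj1 (HE g Hg _ _)).
Qed.

Lemma comp_cancel (g g' : A -> A) (x : 'I_d -> A) :
  cancel g g' -> g' \o (g \o x) = x.
Proof. by move=> c; apply: functional_extensionality => i /=; rewrite c. Qed.

Lemma ind_cancel g g' : is_aut g -> cancel g g' -> cancel g' g -> cancel (ind g) (ind g').
Proof.
move=> Hg c1 c2 b; have Hg' := aut_inv Hg c1 c2.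
have -> : ind g b = h (g \o pick b) by [].
rewrite indE //; last by apply (proj1 (Sinv _ Hg)); apply: pickS.
by rewrite comp_cancel // pickh.
Qed.

Lemma ind_aut g : is_aut g -> is_aut (ind g).
Proof.
move=> Hg; split.
  case: (Hg) => [[g' c1 c2] _].
  have Hg' := aut_inv Hg c1 c2.
  apply: (Bijective (g := ind g')); first exact: ind_cancel.
  exact: ind_cancel.
move=> s t.
have -> : t = h \o (fun i => pick (t i)).
  by apply: functional_extensionality => i /=; rewrite pickh.
have := @Hrel s (fun i => pick (t i)) g Hg (fun i => pickS _).
have -> : ind g \o (h \o (fun i => pick (t i))) = h \o (fun i => g \o pick (t i)).
  by apply: functional_extensionality => i /=; rewrite indE //; apply: pickS.
by [].
Qed.

Lemma olig_B : oligomorphic A -> oligomorphic B.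
Proof.
move=> HA n.
have [k [reps Hr]] := HA #|{: 'I_n * 'I_d}|.
exists k, (fun i j => h (fun l => reps i (enum_rank (j, l)))).
move=> t.
have [i [g [Hg Hgi]]] := Hr (fun q => pick (t (enum_val q).1) (enum_val q).2).
exists i, (ind g); split; first exact: ind_aut.
apply: functional_extensionality => j /=.
have E1 : g \o (fun l => reps i (enum_rank (j, l))) = pick (t j).
  apply: functional_extensionality => l /=.
  by have := equal_f Hgi (enum_rank (j, l)); rewrite /= enum_rankK.
rewrite indE //; first by rewrite E1 pickh.
by apply/(Sinv _ Hg); rewrite E1; apply: pickS.
Qed.


Section FL.
Variable F : fieldType.
Variables (d' : nat) (S' : ('I_d' -> B) -> Prop)
  (E' : ('I_d' -> B) -> ('I_d' -> B) -> Prop).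
Hypothesis HB : orbit_finite_data S' E'.

Local Notation m := #|{: 'I_d' * 'I_d}|.
Definition TT (w : 'I_m -> A) (j : 'I_d') : 'I_d -> A := fun l => w (enum_rank (j, l)).
Definition hT (w : 'I_m -> A) : 'I_d' -> B := fun j => h (TT w j).
Definition SA (w : 'I_m -> A) : Prop := (forall j, S (TT w j)) /\ S' (hT w).
Definition EA (w w' : 'I_m -> A) : Prop := SA w /\ SA w' /\ E' (hT w) (hT w').
Definition liftT (t : 'I_d' -> B) : 'I_m -> A :=
  fun q => pick (t (enum_val q).1) (enum_val q).2.

Lemma TT_lift t j : TT (liftT t) j = pick (t j).
Proof. by apply: functional_extensionality => l; rewrite /TT /liftT enum_rankK. Qed.
Lemma hT_lift t : hT (liftT t) = t.
Proof. by apply: functional_extensionality => j; rewrite /hT TT_lift pickh. Qed.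

Lemma TT_comp g w j : TT (g \o w) j = g \o TT w j.
Proof. by []. Qed.

Lemma compS g w : is_aut g -> (forall j, S (TT (g \o w) j)) <-> (forall j, S (TT w j)).
Proof.
move=> Hg; split => H j; [apply/(Sinv _ Hg); exact: H | apply (proj1 (Sinv _ Hg)); exact: H].
Qed.

Lemma hT_comp g w : is_aut g -> (forall j, S (TT w j)) -> hT (g \o w) = ind g \o hT w.
Proof.
by move=> Hg H; apply: functional_extensionality => j; rewrite /hT /= indE.
Qed.

Lemma SA_inv g w : is_aut g -> SA w <-> SA (g \o w).
Proof.
move=> Hg; case: HB => HS' _; rewrite /SA; split.
  move=> [H1 H2]; split; first by apply/(@compS g _ Hg).
  by rewrite hT_comp //; apply (proj1 (HS' _ (ind_aut Hg) _)).
move=> [H1 H2]; have H1' := proj1 (@compS g _ Hg) H1; split => //.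
apply (proj2 (HS' _ (ind_aut Hg) (hT w))).
by rewrite -hT_comp.
Qed.

Lemma SA_data : orbit_finite_data SA EA.
Proof.
case: HB => HS' [HE' [HES [Hrf [Hsy Htr]]]].
split; first by move=> g Hg t; apply: SA_inv.
split.
  move=> g Hg t u; rewrite /EA; split.
    move=> [St [Su He]]; have St' := St; have Su' := Su.
    move/(@SA_inv g _ Hg): St'; move/(@SA_inv g _ Hg): Su' => Su' St'.
    split => //; split => //.
    have [St1 _] := St; have [Su1 _] := Su.
    rewrite (hT_comp Hg St1) (hT_comp Hg Su1).
    by apply (proj1 (HE' _ (ind_aut Hg) _ _)).
  move=> [St [Su He]].
  have St' := proj2 (@SA_inv g _ Hg) St; have Su' := proj2 (@SA_inv g _ Hg) Su.
  split => //; split => //.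
  apply (proj2 (HE' _ (ind_aut Hg) (hT t) (hT u))).
  have [St1 _] := St'; have [Su1 _] := Su'.
  by rewrite (hT_comp Hg St1) (hT_comp Hg Su1) in He.
split; first by move=> t u [? [? _]].
split; first by move=> t St; split => //; split => //; apply: Hrf; case: St.
split; first by move=> t u [? [? ?]]; split => //; split => //; apply: Hsy.
move=> t u w [? [? ?]] [? [? ?]]; split => //; split => //; apply: Htr; eassumption.
Qed.

Definition liftV (v : ('I_d' -> B) -> F) : ('I_m -> A) -> F :=
  fun w => if excluded_middle_informative (forall j, S (TT w j)) then v (hT w) else 0%R.

Lemma liftV_lift v t : liftV v (liftT t) = v t.
Proof.
rewrite /liftV /=; case: excluded_middle_informative => [H|H]; first by rewrite hT_lift.
by exfalso; apply: H => j; rewrite TT_lift; apply: pickS.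
Qed.

Definition VA (V : (('I_d' -> B) -> F) -> Prop) (x : ('I_m -> A) -> F) : Prop :=
  exists v, V v /\ x = liftV v.

Lemma VA_inv V : invariant_subspace S' E' V -> invariant_subspace SA EA (VA V).
Proof.
case: HB => HS' [HE' [HES [Hrf [Hsy Htr]]]].
move=> [HL [H0 [HD [HZ HG]]]].
split.
  move=> x [v [Vv ->]]; have [L1 [L2 [k [reps L3]]]] := HL v Vv.
  split.
    move=> w; rewrite /liftV; case: excluded_middle_informative => Hw; last by rewrite eqxx.
    by move=> /L1 Hs; split.
  split.
    move=> t u [[St _] [[Su _] He]]; rewrite /liftV.
    case: (excluded_middle_informative (forall j, S (TT t j))) => Ht; last by [].
    case: (excluded_middle_informative (forall j, S (TT u j))) => Hu; last by [].
    exact: L2.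
  exists k, (fun i => liftT (reps i)) => w.
  rewrite /liftV; case: excluded_middle_informative => Hw; last by rewrite eqxx.
  move=> /[dup] /L1 Hs /L3 [i Hi]; exists i.
  have [_ Sr] := HES _ _ Hi.
  split; first by split.
  split; last by rewrite hT_lift.
  by split; [move=> j; rewrite TT_lift; apply: pickS | rewrite hT_lift].
split.
  exists (fun _ => 0%R); split => //; apply: functional_extensionality => w.
  by rewrite /liftV; case: excluded_middle_informative.
split.
  move=> x y [v [Vv ->]] [u [Vu ->]]; exists (fun t => (v t + u t)%R); split; first exact: HD.
  apply: functional_extensionality => w; rewrite /liftV.
  by case: excluded_middle_informative => // ?; rewrite GRing.addr0.
split.
  move=> a x [v [Vv ->]]; exists (fun t => (a * v t)%R); split; first exact: HZ.
  apply: functional_extensionality => w; rewrite /liftV.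
  by case: excluded_middle_informative => // ?; rewrite GRing.mulr0.
move=> g g' Hg c1 c2 x [v [Vv ->]].
have Hg' := aut_inv Hg c1 c2.
exists (fun t => v (ind g' \o t)); split.
  apply: (HG (ind g) (ind g')) => //; [exact: ind_aut|exact: ind_cancel|exact: ind_cancel].
apply: functional_extensionality => w; rewrite /liftV.
case: excluded_middle_informative => H1; case: excluded_middle_informative => H2 //.
- by rewrite -hT_comp.
- by exfalso; apply: H2; apply/(@compS g' _ Hg').
- by exfalso; apply: H1; apply/(@compS g' _ Hg').
Qed.

Lemma fl_B : finite_length F A -> exists N : nat, forall n (V : nat -> (('I_d' -> B) -> F) -> Prop),
      invariant_chain S' E' n V -> (n <= N)%N.
Proof.
move=> HA; have [N HN] := HA _ SA EA SA_data.
exists N => n V [Hi Hc]; apply: (HN n (fun i => VA (V i))); split.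
  by move=> i /Hi; apply: VA_inv.
move=> i /Hc [Hsub [v [Vv NVv]]]; split.
  by move=> x [u [Vu ->]]; exists u; split => //; apply: Hsub.
exists (liftV v); split; first by exists v.
move=> [u [Vu Heq]]; apply: NVv.
have -> : v = u => //.
apply: functional_extensionality => t.
by rewrite -(liftV_lift v) -(liftV_lift u) Heq.
Qed.

End FL.

End Induced.

Theorem mainTheorem17 (F : fieldType) (A : structure) :
  countably_infinite A -> oligomorphic A -> finite_length F A ->
  forall B : structure, fo_interpretable B A ->
    oligomorphic B /\ finite_length F B.
Proof.
move=> _ HoA HfA B [d [S [E [h [HSE [Hsurj [Hinj Hrel]]]]]]].
split; first exact: (olig_B HSE Hsurj Hinj Hrel).
move=> d' S' E' HB.
exact: (fl_B HSE Hsurj Hinj Hrel HB HfA).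
Qed.
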